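(* Let $\Phi$ be a countable set of contexts and $\Xi$ a countable set of human trajectories. Let $P(\phi)$ be a probability distribution on $\Phi$, and for each $\phi\in\Phi$ let $P(\cdot\mid\phi)$ (ground truth) and $P_\theta(\cdot\mid\phi)$ (learned model) be probability distributions on $\Xi$. Fix a robot trajectory $\xi_R$ and a bounded real-valued cost $C(\xi_R\mid\xi_H,\phi)$, $\xi_H\in\Xi$, $\phi\in\Phi$. Define $$\ell(\theta)=\sum_{\phi}P(\phi)\left|\sum_{\xi_H}C(\xi_R\mid\xi_H,\phi)P(\xi_H\mid\phi)-\sum_{\xi_H}C(\xi_R\mid\xi_H,\phi)P_\theta(\xi_H\mid\phi)\right|,$$ $C_{\max}(\phi)=\sup_{\xi_H\in\Xi}|C(\xi_R\mid\xi_H,\phi)|$, and $C_{\max}=\sup_{\phi}C_{\max}(\phi)$. For a threshold $\delta>0$ with $p_\delta:=\mathbb{E}_{P(\phi)}[\mathbb{I}(C_{\max}(\phi)\ge\delta)]>0$, define the transition distribution $P_T(\phi)=P(\phi)\mathbb{I}(C_{\max}(\phi)\ge\delta)/p_\delta$ and $Q(\phi)=\tfrac12P(\phi)+\tfrac12P_T(\phi)$. Then: (i) if $\sum_\phi P(\phi)\sum_{\xi_H}|P(\xi_H\mid\phi)-P_\theta(\xi_H\mid\phi)|\le\epsilon$, then $\ell(\theta)\le C_{\max}\,\epsilon$; (ii) if $\sum_\phi Q(\phi)\sum_{\xi_H}|P(\xi_H\mid\phi)-P_\theta(\xi_H\mid\phi)|\le\epsilon$, then $\ell(\theta)\le 2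\max\big(\delta,\;C_{\max}\,\mathbb{E}_{P(\phi)}[\mathbb{I}(C_{\max}(\phi)\ge\delta)]\big)\,\epsilon$.
   Context: ''Bounded loss of $\epsilon$'' of a model on a distribution over contexts means that the expected (over that context distribution) $L^1$ distance between the ground-truth conditional distribution of future human trajectories and the model's conditional distribution is at most $\epsilon$. $\mathbb{I}$ denotes the indicator function. $\ell(\theta)$ measures, in expectation over contexts drawn from $P(\phi)$, the absolute difference between the expected cost of the fixed robot plan $\xi_R$ under the true human-trajectory distribution and under the model's distribution. *)

(* Defs.v *)
From HB Require Import structures.
From mathcomp Require Import all_boot all_order all_algebra.
From mathcomp Require Import all_classical all_reals all_analysis.
Set Implicit Arguments. Unset Strict Implicit. Unset Printing Implicit Defensive.
Import Order.TTheory GRing.Theory Num.Theory.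
Local Open Scope ring_scope.
Local Open Scope classical_set_scope.

(* Coincides with the usual series
   sum for absolutely summable functions. *)
Definition csum (R : realType) (T : countType) (f : T -> R) : R :=
  fine (\esum_(x in [set: T]) ((Num.max (f x) 0)%:E)) -
  fine (\esum_(x in [set: T]) ((Num.max (- f x) 0)%:E)).

Definition is_distr (R : realType) (T : countType) (p : T -> R) : Prop :=
  (forall x, 0 <= p x) /\ (\esum_(x in [set: T]) (p x)%:E = 1%E).

(* Main.v *)
Require Import Defs.
From HB Require Import structures.
From mathcomp Require Import all_boot all_order all_algebra.
From mathcomp Require Import all_classical all_reals all_analysis.
Import Order.TTheory GRing.Theory Num.Theory.
From mathcomp Require Import ring lra.
Local Open Scope ring_scope.
Local Open Scope classical_set_scope.

Section CS.
Context {R : realType} {T : countType}.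
Implicit Types f g u v : T -> R.

Definition SS f : \bar R := \esum_(x in [set: T]) ((f x)%:E).
Definition summ f := (SS (fun x => (`|f x|)%R) < +oo)%E.

Lemma maxE0 (x : R) : Num.max x 0 - Num.max (-x) 0 = x.
Proof. rewrite !maxEle; case: ifP; case: ifP => ? ?; lra. Qed.
Lemma pos_ge0 (x : R) : 0 <= Num.max x 0.
Proof. rewrite !maxEle; case: ifP => ?; lra. Qed.
Lemma pos_le_abs (x : R) : Num.max x 0 <= `|x|.
Proof. rewrite !maxEle; case: ifP => ?; [exact: normr_ge0| exact: ler_norm]. Qed.
Lemma neg_le_abs (x : R) : Num.max (-x) 0 <= `|x|.
Proof. rewrite -normrN; exact: pos_le_abs. Qed.
Lemma posZ (c x : R) : 0 <= c -> Num.max (c * x) 0 = c * Num.max x 0.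
Proof. move=> c0; rewrite !maxEle; case: ifP; case: ifP => ? ? //; nra. Qed.

Lemma SS_ge0 f : (forall x, 0 <= f x) -> (0 <= SS f)%E.
Proof. by move=> h; apply: esum_ge0 => x _; rewrite lee_fin. Qed.
Lemma SS_le f g : (forall x, f x <= g x) -> (SS f <= SS g)%E.
Proof. by move=> h; apply: le_esum => x _; rewrite lee_fin. Qed.
Lemma SS_add f g : (forall x, 0 <= f x) -> (forall x, 0 <= g x) ->
  SS (fun x => f x + g x) = (SS f + SS g)%E.
Proof.
move=> hf hg; rewrite /SS -esumD; last 2 first.
- by move=> x _; rewrite lee_fin.
- by move=> x _; rewrite lee_fin.
by apply: eq_esum => x _; rewrite EFinD.
Qed.
Lemma SS_Z c f : 0 <= c -> SS (fun x => c * f x) = (c%:E * SS f)%E.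
Proof.
move=> c0; rewrite /SS /esum -ereal_supZl //; last first.
  by apply/set0P; exists 0%E; exists set0; [exact: fsets_set0| rewrite fsbig_set0].
congr ereal_sup; apply/seteqP; split.
- move=> y [A hA <-].
  exists (\sum_(x \in A) (f x)%:E)%E; first by exists A.
  by case: hA => finA _; rewrite !fsumEFin // -EFinM mulr_fsumr.
- move=> y [z [A hA <-] <-]; exists A => //.
  by case: hA => finA _; rewrite !fsumEFin // -EFinM mulr_fsumr.
Qed.
Lemma SS0 : SS (fun _ => 0) = 0%E.
Proof. by apply: esum1. Qed.

Lemma SS_fin f : (SS f < +oo)%E -> (forall x, 0 <= f x) -> SS f = (fine (SS f))%:E.
Proof. by move=> h2 h1; rewrite fineK // ge0_fin_numE // SS_ge0. Qed.

Arguments SS_fin {f}.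

Lemma csumE f : csum f = fine (SS (fun x => Num.max (f x) 0)) - fine (SS (fun x => Num.max (- f x) 0)).
Proof. by []. Qed.

Lemma summ_pos f : summ f -> (SS (fun x => (Num.max (f x) 0)%R) < +oo)%E.
Proof. move=> h; apply: le_lt_trans h; apply: SS_le => x; exact: pos_le_abs. Qed.
Lemma summ_neg f : summ f -> (SS (fun x => (Num.max (- f x) 0)%R) < +oo)%E.
Proof. move=> h; apply: le_lt_trans h; apply: SS_le => x; exact: neg_le_abs. Qed.

Lemma SS_real f : (SS f < +oo)%E -> (forall x, 0 <= f x) -> exists r, SS f = r%:E.
Proof. by move=> h1 h2; exists (fine (SS f)); rewrite (SS_fin h1 h2). Qed.

Arguments SS_real {f}.

Arguments summ_pos {f}.
Arguments summ_neg {f}.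

Lemma csum_dec f u v : (forall x, f x = u x - v x) -> (forall x, 0 <= u x) -> (forall x, 0 <= v x) ->
  (SS u < +oo)%E -> (SS v < +oo)%E -> csum f = fine (SS u) - fine (SS v).
Proof.
move=> hf hu hv fu fv.
have fp : (SS (fun x => (Num.max (f x) 0)%R) < +oo)%E.
  apply: le_lt_trans fu; apply: SS_le => x; rewrite hf maxEle; case: ifP => _; [exact: hu| have := hv x; lra].
have fn : (SS (fun x => (Num.max (- f x) 0)%R) < +oo)%E.
  apply: le_lt_trans fv; apply: SS_le => x; rewrite hf maxEle; case: ifP => _; [exact: hv| have := hu x; lra].
have e : SS (fun x => Num.max (f x) 0 + v x) = SS (fun x => Num.max (- f x) 0 + u x).
  by congr SS; apply: funext => x; have := maxE0 (f x); rewrite hf; lra.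
rewrite !SS_add in e; try (move=> x; exact: pos_ge0); try done.
have [a ea] := SS_real fp (fun x => pos_ge0 _).
have [b eb] := SS_real fn (fun x => pos_ge0 _).
have [c ec] := SS_real fu hu.
have [d ed] := SS_real fv hv.
rewrite ea eb ec ed -!EFinD in e; move: e => [e].
rewrite csumE ea eb ec ed /=; lra.
Qed.

Lemma csum_ge0E f : (forall x, 0 <= f x) -> csum f = fine (SS f).
Proof.
move=> h; rewrite csumE.
have -> : SS (fun x => (Num.max (- f x) 0)%R) = 0%E.
  rewrite -SS0; congr SS; apply: funext => x; rewrite maxEle; case: ifP => //; have := h x; lra.
have -> : SS (fun x => Num.max (f x) 0) = SS f.
  congr SS; apply: funext => x; rewrite maxEle; case: ifP => //; have := h x; lra.
by rewrite subr0.
Qed.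

Lemma csum_ge0 f : (forall x, 0 <= f x) -> 0 <= csum f.
Proof. by move=> h; rewrite csum_ge0E // fine_ge0 // SS_ge0. Qed.

Lemma csumN f : csum (fun x => - f x) = - csum f.
Proof.
rewrite !csumE.
have -> : SS (fun x => Num.max (- - f x) 0) = SS (fun x => Num.max (f x) 0).
  by congr SS; apply: funext => x; rewrite opprK.
lra.
Qed.

Lemma summN f : summ (fun x => - f x) = summ f.
Proof. by rewrite /summ; congr (_ < _)%E; congr SS; apply: funext => x; rewrite normrN. Qed.

Lemma summD f g : summ f -> summ g -> summ (fun x => f x + g x).
Proof.
move=> hf hg; rewrite /summ; apply: (@le_lt_trans _ _ (SS (fun x => `|f x| + `|g x|))).
  by apply: SS_le => x; exact: ler_normD.
rewrite SS_add; try (move=> x; exact: normr_ge0).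
have [a ea] := SS_real hf (fun x => normr_ge0 _).
have [b eb] := SS_real hg (fun x => normr_ge0 _).
by rewrite ea eb -EFinD ltry.
Qed.

Lemma summ_dom f g c : 0 <= c -> summ g -> (forall x, `|f x| <= c * `|g x|) -> summ f.
Proof.
move=> c0 hg h; rewrite /summ; apply: (@le_lt_trans _ _ (SS (fun x => c * `|g x|))).
  by apply: SS_le.
have [b eb] := SS_real hg (fun x => normr_ge0 _).
by rewrite SS_Z // eb -EFinM ltry.
Qed.

Lemma csumD f g : summ f -> summ g -> csum (fun x => f x + g x) = csum f + csum g.
Proof.
move=> hf hg.
have [a ea] := SS_real (summ_pos hf) (fun x => pos_ge0 _).
have [b eb] := SS_real (summ_pos hg) (fun x => pos_ge0 _).
have [c ec] := SS_real (summ_neg hf) (fun x => pos_ge0 _).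
have [d ed] := SS_real (summ_neg hg) (fun x => pos_ge0 _).
rewrite (@csum_dec _ (fun x => Num.max (f x) 0 + Num.max (g x) 0)
                     (fun x => Num.max (- f x) 0 + Num.max (- g x) 0)).
- rewrite !SS_add; try (move=> x; exact: pos_ge0).
  rewrite !csumE ea eb ec ed -!EFinD /=; lra.
- by move=> x; have := maxE0 (f x); have := maxE0 (g x); lra.
- by move=> x; have := pos_ge0 (f x); have := pos_ge0 (g x); lra.
- by move=> x; have := pos_ge0 (- f x); have := pos_ge0 (- g x); lra.
- rewrite SS_add; try (move=> x; exact: pos_ge0).
  by rewrite ea eb -EFinD ltry.
- rewrite SS_add; try (move=> x; exact: pos_ge0).
  by rewrite ec ed -EFinD ltry.
Qed.

Lemma fineZ (c : R) (e : \bar R) : 0 <= c -> (0 <= e)%E -> fine (c%:E * e)%E = c * fine e.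
Proof.
move=> c0; case: e => [r| |] //= _.
have [->|cp] := eqVneq c 0; first by rewrite mul0e mul0r.
by rewrite gt0_muley ?lte_fin ?lt_def ?cp ?c0 //= mulr0.
Qed.

Lemma csumZ c f : 0 <= c -> csum (fun x => c * f x) = c * csum f.
Proof.
move=> c0; rewrite !csumE.
have -> : SS (fun x => (Num.max (c * f x) 0)%R) = (c%:E * SS (fun x => (Num.max (f x) 0)%R))%E.
  by rewrite -SS_Z //; congr SS; apply: funext => x; rewrite posZ.
have -> : SS (fun x => (Num.max (- (c * f x)) 0)%R) = (c%:E * SS (fun x => (Num.max (- f x) 0)%R))%E.
  by rewrite -SS_Z //; congr SS; apply: funext => x; rewrite -posZ // mulrN.
by rewrite !fineZ // ?SS_ge0 //; try (move=> x; exact: pos_ge0); rewrite mulrBr.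
Qed.

Lemma summ_abs f : summ f -> summ (fun x => `|f x|).
Proof. by move=> h; rewrite /summ; under eq_fun do rewrite normr_id. Qed.

Lemma csum_le f g : summ f -> summ g -> (forall x, f x <= g x) -> csum f <= csum g.
Proof.
move=> hf hg h.
have hnf : summ (fun x => - f x) by rewrite summN.
have e := @csumD g (fun x => - f x) hg hnf.
rewrite csumN in e.
have : 0 <= csum (fun x => g x + - f x) by apply: csum_ge0 => x; have := h x; lra.
lra.
Qed.

Lemma csum_abs f : summ f -> `|csum f| <= csum (fun x => `|f x|).
Proof.
move=> h; rewrite ler_norml; apply/andP; split.
- rewrite -csumN; apply: csum_le.
  + by rewrite summN; exact: summ_abs.
  + exact: h.
  + by move=> x; have := ler_norm (- f x); rewrite normrN; lra.
- apply: csum_le => //; first exact: summ_abs.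
  by move=> x; exact: ler_norm.
Qed.

Lemma distr_summ (p : T -> R) : is_distr p -> summ p.
Proof.
case=> h0 h1; rewrite /summ /SS.
under eq_esum do rewrite ger0_norm //.
by rewrite h1 ltry.
Qed.

Lemma distr_csum (p : T -> R) : is_distr p -> csum p = 1.
Proof. by case=> h0 h1; rewrite csum_ge0E // /SS h1. Qed.

Lemma summZ c f : summ f -> summ (fun x => c * f x).
Proof. move=> h; apply: (@summ_dom _ _ `|c|) h _ => //; by move=> x; rewrite normrM. Qed.

End CS.

Arguments distr_summ {R T p}.
Arguments distr_csum {R T p}.
Arguments summ_abs {R T f}.
Arguments summD {R T f g}.
Arguments summZ {R T} c {f}.
Arguments csum_le {R T f g}.
Arguments csum_abs {R T f}.
Arguments csumD {R T f g}.
Arguments summ_dom {R T f g} c.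
Arguments csum_ge0 {R T f}.

Lemma dom_helper (R : realType) (p x B : R) : 0 <= p -> `|x| <= B -> `|p * x| <= B * `|p|.
Proof. move=> p0 h; rewrite normrM (ger0_norm p0) mulrC; exact: ler_wpM2r. Qed.


Lemma sup_range_facts (R : realType) (X : Type) (g : X -> R) (B : R) :
  (forall x, 0 <= g x) -> (forall x, g x <= B) -> 0 <= B ->
  [/\ 0 <= sup (range g), sup (range g) <= B & forall x, g x <= sup (range g)].
Proof.
move=> g0 gB B0.
have ub : has_ubound (range g) by exists B => _ [x _ <-].
have gle : forall x, g x <= sup (range g) by move=> x; apply: ub_le_sup => //; exists x.
case: (pselect (exists x : X, True)) => [[x _]|nx].
- split; [exact: (le_trans (g0 x) (gle x)) | | exact: gle].
  apply: ge_sup; first by exists (g x); exists x.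
  by move=> _ [y _ <-].
- have -> : range g = set0.
    by apply/seteqP; split => // z [y _ _]; exfalso; apply: nx; exists y.
  by rewrite sup0; split => // x; exfalso; apply: nx; exists x.
Qed.


Theorem lemma1 (R : realType) (Phi Xi : countType) (TR : Type)
  (Pphi : Phi -> R) (P Ptheta : Phi -> Xi -> R)
  (C : TR -> Xi -> Phi -> R) (xiR : TR) (delta : R) :
  is_distr Pphi ->
  (forall phi, is_distr (P phi)) ->
  (forall phi, is_distr (Ptheta phi)) ->
  (exists M : R, forall xiH phi, `|C xiR xiH phi| <= M) ->
  let ell : R :=
    csum (fun phi => Pphi phi *
      `| csum (fun xiH => C xiR xiH phi * P phi xiH)
         - csum (fun xiH => C xiR xiH phi * Ptheta phi xiH) |) in
  let Cmaxphi : Phi -> R := fun phi => sup (range (fun xiH => `|C xiR xiH phi|)) in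
  let Cmax : R := sup (range Cmaxphi) in
  let pdelta : R := csum (fun phi => Pphi phi * (if delta <= Cmaxphi phi then 1 else 0)) in
  let PT : Phi -> R := fun phi => Pphi phi * (if delta <= Cmaxphi phi then 1 else 0) / pdelta in
  let Q : Phi -> R := fun phi => 2^-1 * Pphi phi + 2^-1 * PT phi in
  0 < delta -> 0 < pdelta ->
  (forall eps : R,
     csum (fun phi => Pphi phi * csum (fun xiH => `|P phi xiH - Ptheta phi xiH|)) <= eps ->
     ell <= Cmax * eps) /\
  (forall eps : R,
     csum (fun phi => Q phi * csum (fun xiH => `|P phi xiH - Ptheta phi xiH|)) <= eps ->
     ell <= 2 * Num.max delta (Cmax * pdelta) * eps).
Proof.
move=> hPphi hP hPt [M0 hM] ell Cmaxphi Cmax pdelta PT Q hdelta hpdelta.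
pose M := Num.max M0 0.
have M0le : 0 <= M by rewrite le_max lexx orbT.
have hCM : forall xi phi, `|C xiR xi phi| <= M.
  by move=> xi phi; apply: le_trans (hM xi phi) _; rewrite le_max lexx.
have Cf : forall phi, [/\ 0 <= Cmaxphi phi, Cmaxphi phi <= M &
    forall xi, `|C xiR xi phi| <= Cmaxphi phi].
  move=> phi; apply: sup_range_facts;
    [exact: (fun xi => normr_ge0 _) | exact: (fun xi => hCM xi phi) | exact: M0le].
have [Cm0 CmM Cmge] : [/\ 0 <= Cmax, Cmax <= M & forall phi, Cmaxphi phi <= Cmax].
  apply: sup_range_facts; last exact: M0le.
  - by move=> phi; have [] := Cf phi.
  - by move=> phi; have [] := Cf phi.
pose d := fun phi => csum (fun xiH => `|P phi xiH - Ptheta phi xiH|).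
have sPphi := distr_summ hPphi.
have Pphi0 : forall phi, 0 <= Pphi phi by case: hPphi.
have sdiff : forall phi, summ (fun xiH => `|P phi xiH - Ptheta phi xiH|).
  move=> phi; apply: summ_abs; apply: summD; first exact: distr_summ.
  by rewrite summN; exact: distr_summ.
have d0 : forall phi, 0 <= d phi by move=> phi; apply: csum_ge0 => x.
have d2 : forall phi, d phi <= 2.
  move=> phi.
  have e : csum (fun x => P phi x + Ptheta phi x) = 2.
    by rewrite csumD ?(distr_csum (hP phi)) ?(distr_csum (hPt phi)) //; exact: distr_summ.
  rewrite -e.
  apply: csum_le => //; first by apply: summD; exact: distr_summ.
  move=> x; have [hp0 _] := hP phi; have [hq0 _] := hPt phi.
  by apply: le_trans (ler_normB _ _) _; rewrite !ger0_norm.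
have Dbound : forall phi, `| csum (fun xiH => C xiR xiH phi * P phi xiH)
         - csum (fun xiH => C xiR xiH phi * Ptheta phi xiH) | <= Cmaxphi phi * d phi.
  move=> phi; have [Cp0 CpM Cpge] := Cf phi.
  have sCP : summ (fun xiH => C xiR xiH phi * P phi xiH).
    apply: (summ_dom M) (distr_summ (hP phi)) _ => // x.
    by rewrite normrM ler_wpM2r.
  have sCPt : summ (fun xiH => C xiR xiH phi * Ptheta phi xiH).
    apply: (summ_dom M) (distr_summ (hPt phi)) _ => // x.
    by rewrite normrM ler_wpM2r.
  have sN : summ (fun xiH => - (C xiR xiH phi * Ptheta phi xiH)) by rewrite summN.
  rewrite -csumN -csumD //.
  apply: le_trans (csum_abs (summD sCP sN)) _.
  rewrite /d -csumZ //.
  apply: csum_le.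
  - by apply: summ_abs; exact: summD.
  - exact: summZ.
  - move=> x; rewrite -mulrBr normrM; apply: ler_wpM2r => //.
all: try exact: Cpge.
pose I := fun phi => (if delta <= Cmaxphi phi then 1 else 0) : R.
have I0 : forall phi, 0 <= I phi by move=> phi; rewrite /I; case: ifP.
have I1 : forall phi, I phi <= 1 by move=> phi; rewrite /I; case: ifP.
have sG1 : summ (fun phi => Pphi phi * d phi).
  apply: (summ_dom 2) sPphi _ => // phi; apply: dom_helper => //.
  by rewrite ger0_norm.
have sG2 : summ (fun phi => Pphi phi * I phi * d phi).
  apply: (summ_dom 2) sPphi _ => // phi; rewrite -mulrA; apply: dom_helper => //.
  rewrite ger0_norm ?mulr_ge0 //.
  by have := d2 phi; have := I1 phi; have := I0 phi; have := d0 phi; nra.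
have sF2 : summ (fun phi => Pphi phi * (Cmaxphi phi * d phi)).
  apply: (summ_dom (M * 2)) sPphi _ => //; first by nra.
  move=> phi; apply: dom_helper => //.
  have [Cp0 CpM _] := Cf phi.
  rewrite ger0_norm ?mulr_ge0 //.
  by have := d2 phi; have := d0 phi; nra.
have sF1 : summ (fun phi => Pphi phi *
      `| csum (fun xiH => C xiR xiH phi * P phi xiH)
         - csum (fun xiH => C xiR xiH phi * Ptheta phi xiH) |).
  apply: (summ_dom (M * 2)) sPphi _ => //; first by nra.
  move=> phi; apply: dom_helper => //.
  have [Cp0 CpM _] := Cf phi.
  rewrite normr_id; apply: le_trans (Dbound phi) _.
  by have := d2 phi; have := d0 phi; nra.
have ellF : ell <= csum (fun phi => Pphi phi * (Cmaxphi phi * d phi)).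
  rewrite /ell; apply: csum_le => // phi.
  by apply: ler_wpM2l => //; exact: Dbound.
have S10 : 0 <= csum (fun phi => Pphi phi * d phi).
  by apply: csum_ge0 => phi; rewrite mulr_ge0.
have S20 : 0 <= csum (fun phi => Pphi phi * I phi * d phi).
  by apply: csum_ge0 => phi; rewrite !mulr_ge0.
split.
- move=> eps H.
  apply: (le_trans ellF).
  apply: (@le_trans _ _ (csum (fun phi => Cmax * (Pphi phi * d phi)))).
    apply: csum_le => //; first exact: summZ.
    move=> phi; rewrite mulrCA; apply: ler_wpM2r; last exact: Cmge.
    by rewrite mulr_ge0.
  rewrite csumZ //; apply: ler_wpM2l => //.
- move=> eps H.
  have eQ : csum (fun phi => Q phi * d phi) =
      2^-1 * csum (fun phi => Pphi phi * d phi)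
      + (2^-1 / pdelta) * csum (fun phi => Pphi phi * I phi * d phi).
    have e : (fun phi => Q phi * d phi) = (fun phi =>
        2^-1 * (Pphi phi * d phi) + (2^-1 / pdelta) * (Pphi phi * I phi * d phi)).
      by apply: funext => phi; rewrite /Q /PT /I; field; lra.
    rewrite e csumD; try exact: summZ.
    rewrite !csumZ //; first by rewrite divr_ge0 // ltW.
  have H' : 2^-1 * csum (fun phi => Pphi phi * d phi)
      + (2^-1 / pdelta) * csum (fun phi => Pphi phi * I phi * d phi) <= eps.
    by rewrite -eQ.
  have ell2 : ell <= delta * csum (fun phi => Pphi phi * d phi)
      + Cmax * csum (fun phi => Pphi phi * I phi * d phi).
    have e : csum (fun phi => delta * (Pphi phi * d phi) + Cmax * (Pphi phi * I phi * d phi))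
        = delta * csum (fun phi => Pphi phi * d phi)
          + Cmax * csum (fun phi => Pphi phi * I phi * d phi).
      by rewrite csumD; try exact: summZ; rewrite !csumZ // ltW.
    rewrite -e; apply: (le_trans ellF).
    apply: csum_le => //; first by apply: summD; exact: summZ.
    move=> phi; have := Cmge phi; have := Pphi0 phi; have := d0 phi.
    have [Cp0 _ _] := Cf phi.
    rewrite /I; case: ifP => hc.
    + move=> hd hp hc'; have t0 : 0 <= Pphi phi * d phi by rewrite mulr_ge0.
      have h1 : 0 <= (Cmax - Cmaxphi phi) * (Pphi phi * d phi) by rewrite mulr_ge0 // subr_ge0.
      have h2 : 0 <= delta * (Pphi phi * d phi) by rewrite mulr_ge0 // ltW.
      rewrite mulr1; nra.
    + move/negbT: hc; rewrite -ltNge => hc hd hp hc'.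
      have t0 : 0 <= Pphi phi * d phi by rewrite mulr_ge0.
      have h1 : 0 <= (delta - Cmaxphi phi) * (Pphi phi * d phi) by rewrite mulr_ge0 // subr_ge0 ltW.
      rewrite mulr0 mul0r mulr0 addr0; nra.
  move: ell2 H'.
  set S1 := csum (fun phi => Pphi phi * d phi).
  set S2 := csum (fun phi => Pphi phi * I phi * d phi).
  set m := Num.max delta (Cmax * pdelta).
  have hm1 : delta <= m by rewrite le_max lexx.
  have hm2 : Cmax * pdelta <= m by rewrite le_max lexx orbT.
  pose T := S2 / pdelta.
  have eS2 : S2 = pdelta * T by rewrite /T; field; lra.
  have T0 : 0 <= T by rewrite /T divr_ge0 // ltW.
  have -> : 2^-1 / pdelta * S2 = 2^-1 * T by rewrite /T; field; lra.
  rewrite eS2 => h1 h2.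
  have m0 : 0 <= m by lra.
  have p1 : 0 <= (m - delta) * S1 by rewrite mulr_ge0 // subr_ge0.
  have p2 : 0 <= (m - Cmax * pdelta) * T by rewrite mulr_ge0 // subr_ge0.
  have p3 : 0 <= m * (eps - (2^-1 * S1 + 2^-1 * T)) by rewrite mulr_ge0 // subr_ge0.
  nra.
Qed.
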